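(* Assume the exploration assumption in the context and let $\Pi=\{\pi:\min_{s,a}\pi(a\mid s)>0\}$. Then: (1) For any $\pi\in\Pi$, $\bar F(Q,\pi)=[(I-D_\pi)+D_\pi\mathcal H](Q)$ for all $Q\in\mathbb R^{|\mathcal S||\mathcal A|}$, where $D_\pi=\mathrm{diag}(\bar\mu_\pi)$. (2) For any $Q_1,Q_2$ and $\pi\in\Pi$: $\|\bar F(Q_1,\pi)-\bar F(Q_2,\pi)\|_\infty\le\gamma_\pi\|Q_1-Q_2\|_\infty$ and $\|\bar F(Q_1,\pi)\|_\infty\le\|Q_1\|_\infty+1$, where $\gamma_\pi=1-D_{\pi,\min}(1-\gamma)$ and $D_{\pi,\min}=\min_{s,a}\bar\mu_\pi(s,a)>0$. (3) For any $\pi\in\Pi$, the equation $\bar F(Q,\pi)=Q$ has the unique solution $Q=Q^*$. (4) For any $Q_1,Q_2$ with $\|Q_1\|_\infty,\|Q_2\|_\infty\le1/(1-\gamma)$ and $\pi_1,\pi_2\in\Pi$: $\|\bar F(Q_1,\pi_1)-\bar F(Q_2,\pi_2)\|_\infty\le3\|Q_1-Q_2\|_\infty+\frac{2}{1-\gamma}\|\bar\mu_{\pi_1}-\bar\mu_{\pi_2}\|_\infty$.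
   Context: Finite MDP: states $\mathcal S$, actions $\mathcal A$, kernel $p(s'\mid s,a)$, reward $\mathcal R$ with $|\mathcal R(s,a)|\le1$, discount $\gamma\in(0,1)$. $[\mathcal H(Q)](s,a)=\mathcal R(s,a)+\gamma\sum_{s'}p(s'\mid s,a)\max_{a'}Q(s',a')$; $Q^*$ its unique fixed point (optimal Q-function). Exploration assumption: there is a policy $\pi_b$ with $\pi_b(a\mid s)>0$ for all $(s,a)$ whose state chain $P_{\pi_b}(s,s')=\sum_ap(s'\mid s,a)\pi_b(a\mid s)$ is irreducible. For $\pi\in\Pi$, the state chain $P_\pi$ is then irreducible with unique stationary distribution $\mu_\pi$, and $\bar\mu_\pi(s,a)=\mu_\pi(s)\pi(a\mid s)$ is the stationary distribution of the state-action chain $\bar P_\pi((s,a),(s',a'))=p(s'\mid s,a)\pi(a'\mid s')$. For $Q\in\mathbb R^{|\mathcal S||\mathcal A|}$ and $y=(s_0,a_0)\in\mathcal S\times\mathcal A$: $[F(Q,y)](s,a)=\mathbb 1_{\{(s_0,a_0)=(s,a)\}}(\mathcal R(s,a)+\gamma\sum_{s'}p(s'\mid s,a)\max_{a'}Q(s',a')-Q(s,a))+Q(s,a)$, and $\bar F(Q,\pi)=\mathbb E_{Y\sim\bar\mu_\pi}[F(Q,Y)]$. $\|\cdot\|_\infty$ is the max norm. *)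

(* Defs.v *)
From HB Require Import structures.
From mathcomp Require Import all_boot all_order all_algebra.
From mathcomp Require Import reals.
Set Implicit Arguments. Unset Strict Implicit. Unset Printing Implicit Defensive.
Import Order.TTheory GRing.Theory Num.Theory.
Local Open Scope ring_scope.

Section MDP.
Variables (R : realType) (S A : finType).

(* maximum / minimum of a function over a finite type (0 on an empty type) *)
Definition fmax (T : finType) (f : T -> R) : R :=
  match enum T with [::] => 0 | x :: _ => \big[Num.max/f x]_(y : T) f y end.
Definition fmin (T : finType) (f : T -> R) : R :=
  match enum T with [::] => 0 | x :: _ => \big[Num.min/f x]_(y : T) f y end.

Definition supnorm (Q : S -> A -> R) : R :=
  \big[Num.max/0]_(sa : S * A) `|Q sa.1 sa.2|.

Definition is_kernel (p : S -> A -> S -> R) : Prop :=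
  (forall s a s', 0 <= p s a s') /\ (forall s a, \sum_(s' : S) p s a s' = 1).

Definition is_policy (pi : S -> A -> R) : Prop :=
  (forall s a, 0 <= pi s a) /\ (forall s, \sum_(a : A) pi s a = 1).

Definition in_Pi (pi : S -> A -> R) : Prop :=
  is_policy pi /\ 0 < fmin (fun sa : S * A => pi sa.1 sa.2).

Definition Pchain (p : S -> A -> S -> R) (pi : S -> A -> R) (s s' : S) : R :=
  \sum_(a : A) p s a s' * pi s a.

Fixpoint nstep (P : S -> S -> R) (n : nat) (s s' : S) : R :=
  match n with
  | 0 => if s == s' then 1 else 0
  | n.+1 => \sum_(u : S) nstep P n s u * P u s'
  end.

Definition irreducible (P : S -> S -> R) : Prop :=
  forall s s', exists n, 0 < nstep P n s s'.

Definition stationary (P : S -> S -> R) (mu : S -> R) : Prop :=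
  (forall s, 0 <= mu s) /\ \sum_(s : S) mu s = 1 /\
  (forall s', \sum_(s : S) mu s * P s s' = mu s').

Definition exploration (p : S -> A -> S -> R) : Prop :=
  exists pib : S -> A -> R, is_policy pib /\ (forall s a, 0 < pib s a) /\
    irreducible (Pchain p pib).

Definition mubar (mu : S -> R) (pi : S -> A -> R) (s : S) (a : A) : R :=
  mu s * pi s a.

Definition bellman (p : S -> A -> S -> R) (r : S -> A -> R) (gamma : R)
  (Q : S -> A -> R) (s : S) (a : A) : R :=
  r s a + gamma * \sum_(s' : S) p s a s' * fmax (fun a' : A => Q s' a').

Definition Fop (p : S -> A -> S -> R) (r : S -> A -> R) (gamma : R)
  (Q : S -> A -> R) (y : S * A) (s : S) (a : A) : R :=
  (if y == (s, a) then 1 else 0) * (bellman p r gamma Q s a - Q s a) + Q s a.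

(* bar F(Q, pi) = E_{Y ~ w}[F(Q, Y)], with w = bar mu_pi *)
Definition Fbar (p : S -> A -> S -> R) (r : S -> A -> R) (gamma : R)
  (Q : S -> A -> R) (w : S -> A -> R) (s : S) (a : A) : R :=
  \sum_(y : S * A) w y.1 y.2 * Fop p r gamma Q y s a.

End MDP.

(* Main.v *)
Require Import Defs.
From HB Require Import structures.
From mathcomp Require Import all_boot all_order all_algebra.
From mathcomp Require Import reals.
From mathcomp Require Import ring lra.
From Stdlib Require Import FunctionalExtensionality.
Import Order.TTheory GRing.Theory Num.Theory.
Local Open Scope ring_scope.

Set Implicit Arguments. Unset Strict Implicit. Unset Printing Implicit Defensive.

Section H.
Variable R : realType.

Lemma fmin_le (T : finType) (f : T -> R) j : fmin f <= f j.
Proof.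
rewrite /fmin; case E: (enum T) => [|x l].
  by have := mem_enum T j; rewrite E in_nil.
exact: bigmin_le.
Qed.

Lemma fmin_gt0 (T : finType) (f : T -> R) (j : T) :
  (forall x, 0 < f x) -> 0 < fmin f.
Proof.
move=> H; rewrite /fmin; case E: (enum T) => [|x l].
  by have := mem_enum T j; rewrite E in_nil.
by apply: lt_bigmin => // i _.
Qed.

Lemma fmax_le_shift (T : finType) (f g : T -> R) c : 0 <= c ->
  (forall x, f x <= g x + c) -> fmax f <= fmax g + c.
Proof.
move=> c0 H; rewrite /fmax; case E: (enum T) => [|x l]; first by rewrite add0r.
apply: bigmax_le => [|i _]; apply: le_trans (H _) _; rewrite lerD2r.
  exact: le_bigmax.
exact: le_bigmax.
Qed.

Lemma fmax_abs_le (T : finType) (f : T -> R) c : 0 <= c ->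
  (forall x, `|f x| <= c) -> `|fmax f| <= c.
Proof.
move=> c0 H; rewrite /fmax; case E: (enum T) => [|x l]; first by rewrite normr0.
rewrite ler_norml; apply/andP; split.
  apply: le_trans (bigmax_ge_id _ _ _ _); have := H x; rewrite ler_norml.
  by case/andP.
apply: bigmax_le => [|i _].
  by have := H x; rewrite ler_norml => /andP[].
by have := H i; rewrite ler_norml => /andP[].
Qed.

Lemma fmax_lip (T : finType) (f g : T -> R) c : 0 <= c ->
  (forall x, `|f x - g x| <= c) -> `|fmax f - fmax g| <= c.
Proof.
move=> c0 H; rewrite ler_norml; apply/andP; split.
- have : fmax g <= fmax f + c.
    apply: fmax_le_shift => // x; have := H x; rewrite ler_norml => /andP[h _]; lra.
  lra.
- have : fmax f <= fmax g + c.
    apply: fmax_le_shift => // x; have := H x; rewrite ler_norml => /andP[_ h]; lra.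
  lra.
Qed.

Lemma le_sum_nonneg (T : finType) (f : T -> R) j :
  (forall x, 0 <= f x) -> f j <= \sum_x f x.
Proof.
move=> H; rewrite (bigD1 j) //= lerDl; exact: sumr_ge0.
Qed.

End H.

Section H1b.
Variable R : realType.
Lemma fmin_gt0_of (T : finType) (f g : T -> R) :
  0 < fmin f -> (forall x, 0 < g x) -> 0 < fmin g.
Proof.
rewrite /fmin; case E: (enum T) => [|x l]; first by rewrite ltxx.
by move=> _ H; apply: lt_bigmin.
Qed.

Lemma fmin_le_c (T : finType) (f : T -> R) c : 0 <= c ->
  (forall x, f x <= c) -> fmin f <= c.
Proof.
rewrite /fmin; case E: (enum T) => [|x l] // c0 H.
exact: bigmin_inf (H x).
Qed.
End H1b.
Set Implicit Arguments. Unset Strict Implicit. Unset Printing Implicit Defensive.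

Section H2.
Variables (R : realType) (S A : finType).

Lemma supnorm_ge (Q : S -> A -> R) s a : `|Q s a| <= supnorm Q.
Proof. rewrite /supnorm; exact: (le_bigmax _ _ (s, a)). Qed.

Lemma supnorm_ge0 (Q : S -> A -> R) : 0 <= supnorm Q.
Proof. exact: bigmax_ge_id. Qed.

Lemma supnorm_le (Q : S -> A -> R) c : 0 <= c ->
  (forall s a, `|Q s a| <= c) -> supnorm Q <= c.
Proof. move=> c0 H; apply: bigmax_le => // [[s a]] _; exact: H. Qed.

Variables (p : S -> A -> S -> R) (r : S -> A -> R) (gamma : R).
Hypothesis hp : is_kernel p.
Hypothesis hr : forall s a, `|r s a| <= 1.
Hypothesis hg0 : 0 < gamma.

Lemma sum_p_bound (f : S -> R) c s a : 0 <= c -> (forall s', `|f s'| <= c) ->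
  `|\sum_s' p s a s' * f s'| <= c.
Proof.
move=> c0 H; case: hp => hp0 hp1.
apply: le_trans (ler_norm_sum _ _ _) _.
apply: le_trans (_ : \sum_s' p s a s' * c <= _).
  apply: ler_sum => s' _; rewrite normrM ger0_norm //; exact: ler_wpM2l.
by rewrite -mulr_suml hp1 mul1r.
Qed.

Lemma bellman_lip (Q1 Q2 : S -> A -> R) s a :
  `|bellman p r gamma Q1 s a - bellman p r gamma Q2 s a|
    <= gamma * supnorm (fun s a => Q1 s a - Q2 s a).
Proof.
rewrite /bellman.
have -> : r s a + gamma * \sum_s' p s a s' * fmax (fun a' => Q1 s' a') -
    (r s a + gamma * \sum_s' p s a s' * fmax (fun a' => Q2 s' a')) =
    gamma * \sum_s' p s a s' * (fmax (fun a' => Q1 s' a') - fmax (fun a' => Q2 s' a')).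
  have -> : \sum_s' p s a s' * (fmax (fun a' => Q1 s' a') - fmax (fun a' => Q2 s' a')) =
     \sum_s' p s a s' * fmax (fun a' => Q1 s' a') - \sum_s' p s a s' * fmax (fun a' => Q2 s' a').
    by rewrite -sumrB; apply: eq_bigr => i _; ring.
  ring.
rewrite normrM gtr0_norm //; apply: ler_wpM2l; first exact: ltW.
apply: sum_p_bound; first exact: supnorm_ge0.
move=> s'; apply: fmax_lip; first exact: supnorm_ge0.
move=> a'; exact: (supnorm_ge (fun s a => Q1 s a - Q2 s a)).
Qed.

Lemma bellman_bound (Q : S -> A -> R) s a :
  `|bellman p r gamma Q s a| <= 1 + gamma * supnorm Q.
Proof.
rewrite /bellman; apply: le_trans (ler_normD _ _) _; apply: lerD => //.
rewrite normrM gtr0_norm //; apply: ler_wpM2l; first exact: ltW.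
apply: sum_p_bound; first exact: supnorm_ge0.
move=> s'; apply: fmax_abs_le; first exact: supnorm_ge0.
move=> a'; exact: supnorm_ge.
Qed.

Lemma Fbar_eq (Q w : S -> A -> R) s a : \sum_(y : S * A) w y.1 y.2 = 1 ->
  Fbar p r gamma Q w s a = Q s a + w s a * (bellman p r gamma Q s a - Q s a).
Proof.
move=> hw; rewrite /Fbar /Fop (bigD1 (s, a)) //= eqxx mul1r.
rewrite (eq_bigr (fun y : S * A => w y.1 y.2 * Q s a)); last first.
  by move=> y /negbTE ->; rewrite mul0r add0r.
rewrite -mulr_suml.
rewrite (bigD1 (s, a)) //= in hw.
have -> : \sum_(i | i != (s, a)) w i.1 i.2 = 1 - w s a by rewrite -hw; ring.
ring.
Qed.

End H2.
Set Implicit Arguments. Unset Strict Implicit. Unset Printing Implicit Defensive.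

Section H3.
Variables (R : realType) (S A : finType).

Lemma nstep_ge0 (P : S -> S -> R) : (forall s s', 0 <= P s s') ->
  forall n s s', 0 <= nstep P n s s'.
Proof.
move=> H; elim=> [|n IH] s s' /=; first by case: eqP.
apply: sumr_ge0 => u _; exact: mulr_ge0.
Qed.

Lemma nstep_stat (P : S -> S -> R) mu : stationary P mu ->
  forall n s', \sum_s mu s * nstep P n s s' = mu s'.
Proof.
case=> _ [_ H]; elim=> [|n IH] s' /=.
  rewrite (bigD1 s') //= eqxx mulr1 big1 ?addr0 // => s /negbTE ->.
  by rewrite mulr0.
rewrite -[RHS]H.
under eq_bigr => s _ do rewrite mulr_sumr.
rewrite exchange_big /=; apply: eq_bigr => u _.
by rewrite -IH mulr_suml; apply: eq_bigr => s _; rewrite mulrA.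
Qed.

Lemma nstep_scale (P Q : S -> S -> R) c : 0 <= c ->
  (forall s s', 0 <= Q s s') -> (forall s s', c * Q s s' <= P s s') ->
  forall n s s', c ^+ n * nstep Q n s s' <= nstep P n s s'.
Proof.
move=> c0 Q0 H; elim=> [|n IH] s s' /=; first by rewrite expr0 mul1r.
rewrite mulr_sumr; apply: ler_sum => u _.
rewrite exprS.
have -> : c * c ^+ n * (nstep Q n s u * Q u s') =
          (c ^+ n * nstep Q n s u) * (c * Q u s') by ring.
apply: ler_pM => //.
- apply: mulr_ge0; [exact: exprn_ge0 | exact: nstep_ge0].
- exact: mulr_ge0.
Qed.

Lemma mubar_sum {p : S -> A -> S -> R} [pi : S -> A -> R] [mu : S -> R] :
  is_policy pi -> stationary (Pchain p pi) mu ->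
  \sum_(y : S * A) mubar mu pi y.1 y.2 = 1.
Proof.
case=> _ hpi [_ [hmu _]].
rewrite -(pair_bigA _ (fun s a => mubar mu pi s a)) /= -[RHS]hmu.
apply: eq_bigr => s _; by rewrite /mubar -mulr_sumr hpi mulr1.
Qed.

Lemma mubar_ge0 {p : S -> A -> S -> R} [pi : S -> A -> R] [mu : S -> R] :
  is_policy pi -> stationary (Pchain p pi) mu -> forall s a, 0 <= mubar mu pi s a.
Proof. case=> hpi _ [hmu _] s a; apply: mulr_ge0; [exact: hmu|exact: hpi]. Qed.

Lemma mubar_le1 {p : S -> A -> S -> R} [pi : S -> A -> R] [mu : S -> R] :
  is_policy pi -> stationary (Pchain p pi) mu -> forall s a, mubar mu pi s a <= 1.
Proof.
move=> hpi hmu s a; rewrite -(mubar_sum hpi hmu).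
have := @le_sum_nonneg R _ (fun y : S * A => mubar mu pi y.1 y.2) (s, a).
apply => y; exact: (mubar_ge0 hpi hmu).
Qed.

Lemma mu_pos {p : S -> A -> S -> R} [pi : S -> A -> R] [mu : S -> R] : is_kernel p ->
  exploration p -> in_Pi pi -> stationary (Pchain p pi) mu -> forall s, 0 < mu s.
Proof.
move=> [hp0 _] [pib [[pib0 pib1] [pibpos irr]]] [[pi0 pi1] hmin] hmu s'.
set m := fmin (fun sa : S * A => pi sa.1 sa.2) in hmin.
have hpim : forall s a, m <= pi s a.
  by move=> s a; exact: (fmin_le (fun sa : S * A => pi sa.1 sa.2) (s, a)).
have hpib1 : forall s a, pib s a <= 1.
  by move=> s a; rewrite -(pib1 s); apply: le_sum_nonneg => x; exact: pib0.
have Pb0 : forall s s', 0 <= Pchain p pib s s'.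
  by move=> s s''; apply: sumr_ge0 => a _; apply: mulr_ge0.
have Pcmp : forall s s', m * Pchain p pib s s' <= Pchain p pi s s'.
  move=> s s''; rewrite /Pchain mulr_sumr; apply: ler_sum => a _.
  have -> : m * (p s a s'' * pib s a) = p s a s'' * (m * pib s a) by ring.
  apply: ler_wpM2l => //; apply: le_trans (hpim s a).
  by rewrite ger_pMr // hpib1.
have P0 : forall s s', 0 <= Pchain p pi s s'.
  by move=> s s''; apply: sumr_ge0 => a _; apply: mulr_ge0.
have [s0 hs0] : exists s0, 0 < mu s0.
  case: (boolP [exists s, 0 < mu s]) => [/existsP [s0 h]|]; first by exists s0.
  rewrite negb_exists => /forallP hn.
  case: hmu => _ [hsum _].
  have : \sum_s mu s <= 0.
    apply: le_trans (_ : \sum_s mu s <= \sum_(s : S) (0:R)) _.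
      by apply: ler_sum => s _; rewrite leNgt hn.
    by rewrite big1.
  by rewrite hsum ler10.
have [n hn] := irr s0 s'.
rewrite -(nstep_stat hmu n s').
apply: lt_le_trans (_ : mu s0 * nstep (Pchain p pi) n s0 s' <= _).
  apply: mulr_gt0 => //; apply: lt_le_trans (nstep_scale (ltW hmin) Pb0 Pcmp n s0 s').
  by apply: mulr_gt0 => //; apply: exprn_gt0.
have := @le_sum_nonneg R S (fun s => mu s * nstep (Pchain p pi) n s s') s0.
apply => s.
apply: mulr_ge0; [case: hmu => h _; exact: h | exact: nstep_ge0].
Qed.

End H3.
Unset Implicit Arguments. Set Strict Implicit.

Theorem lemma2 (R : realType) (S A : finType)
  (p : S -> A -> S -> R) (r : S -> A -> R) (gamma : R)
  (hp : is_kernel p) (hr : forall s a, `|r s a| <= 1)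
  (hg0 : 0 < gamma) (hg1 : gamma < 1)
  (hexpl : exploration p) :
  (* (1) *)
  (forall (pi : S -> A -> R) (mu : S -> R),
     in_Pi pi -> stationary (Pchain p pi) mu ->
     forall Q : S -> A -> R,
       Fbar p r gamma Q (mubar mu pi) =
       (fun s a => (Q s a - mubar mu pi s a * Q s a)
                   + mubar mu pi s a * bellman p r gamma Q s a)) /\
  (* (2) *)
  (forall (pi : S -> A -> R) (mu : S -> R),
     in_Pi pi -> stationary (Pchain p pi) mu ->
     let Dmin := fmin (fun sa : S * A => mubar mu pi sa.1 sa.2) in
     0 < Dmin /\
     forall Q1 Q2 : S -> A -> R,
       supnorm (fun s a => Fbar p r gamma Q1 (mubar mu pi) s a
                           - Fbar p r gamma Q2 (mubar mu pi) s a)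
         <= (1 - Dmin * (1 - gamma)) * supnorm (fun s a => Q1 s a - Q2 s a) /\
       supnorm (Fbar p r gamma Q1 (mubar mu pi)) <= supnorm Q1 + 1) /\
  (* (3) *)
  (forall Qstar : S -> A -> R, bellman p r gamma Qstar = Qstar ->
   forall (pi : S -> A -> R) (mu : S -> R),
     in_Pi pi -> stationary (Pchain p pi) mu ->
     forall Q : S -> A -> R, Fbar p r gamma Q (mubar mu pi) = Q <-> Q = Qstar) /\
  (* (4) *)
  (forall (Q1 Q2 : S -> A -> R) (pi1 pi2 : S -> A -> R) (mu1 mu2 : S -> R),
     supnorm Q1 <= 1 / (1 - gamma) -> supnorm Q2 <= 1 / (1 - gamma) ->
     in_Pi pi1 -> stationary (Pchain p pi1) mu1 ->
     in_Pi pi2 -> stationary (Pchain p pi2) mu2 ->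
     supnorm (fun s a => Fbar p r gamma Q1 (mubar mu1 pi1) s a
                         - Fbar p r gamma Q2 (mubar mu2 pi2) s a)
       <= 3 * supnorm (fun s a => Q1 s a - Q2 s a)
          + 2 / (1 - gamma)
            * supnorm (fun s a => mubar mu1 pi1 s a - mubar mu2 pi2 s a)).
Proof.
have mubar_pos : forall pi mu, in_Pi pi -> stationary (Pchain p pi) mu ->
    forall s a, 0 < mubar mu pi s a.
  move=> pi mu hpi hmu s a; apply: mulr_gt0; first exact: (mu_pos hp hexpl hpi hmu).
  case: hpi => _ hmin.
  apply: lt_le_trans hmin _.
  exact: (fmin_le (fun sa : S * A => pi sa.1 sa.2) (s, a)).
split; [|split; [|split]].
- move=> pi mu [hpi _] hmu Q.
  apply: functional_extensionality_dep => s; apply: functional_extensionality_dep => a.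
  rewrite (Fbar_eq p r gamma Q s a (mubar_sum hpi hmu)); ring.
- move=> pi mu hPi hmu Dmin.
  have hpi := hPi.1.
  have hD0 : 0 < Dmin.
    apply: (fmin_gt0_of hPi.2) => x; exact: mubar_pos.
  have hD1 : Dmin <= 1.
    by apply: fmin_le_c => // x; exact: (mubar_le1 hpi hmu).
  split => // Q1 Q2; split.
  + set N := supnorm (fun s a => Q1 s a - Q2 s a).
    have N0 : 0 <= N by exact: supnorm_ge0.
    apply: supnorm_le.
      apply: mulr_ge0 => //; have : 0 <= Dmin * (1 - gamma).
        apply: mulr_ge0; lra.
      have : Dmin * (1 - gamma) <= 1 * 1 by apply: ler_pM; lra.
      lra.
    move=> s a.
    rewrite (Fbar_eq p r gamma Q1 s a (mubar_sum hpi hmu)).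
    rewrite (Fbar_eq p r gamma Q2 s a (mubar_sum hpi hmu)).
    set w := mubar mu pi s a.
    have w0 : 0 <= w := mubar_ge0 hpi hmu s a.
    have w1 : w <= 1 := mubar_le1 hpi hmu s a.
    have wD : Dmin <= w by exact: (fmin_le (fun sa : S * A => mubar mu pi sa.1 sa.2) (s, a)).
    have hd : `|Q1 s a - Q2 s a| <= N := supnorm_ge (fun s a => Q1 s a - Q2 s a) s a.
    have hH := bellman_lip r hp hg0 Q1 Q2 s a; rewrite -/N in hH.
    set H1 := bellman p r gamma Q1 s a in hH *; set H2 := bellman p r gamma Q2 s a in hH *.
    clearbody w.
    have -> : Q1 s a + w * (H1 - Q1 s a) - (Q2 s a + w * (H2 - Q2 s a)) =
              (1 - w) * (Q1 s a - Q2 s a) + w * (H1 - H2) by ring.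
    apply: le_trans (ler_normD _ _) _.
    rewrite !normrM (ger0_norm w0) ger0_norm; last lra.
    have e1 : (1 - w) * `|Q1 s a - Q2 s a| <= (1 - w) * N by apply: ler_wpM2l; lra.
    have e2 : w * `|H1 - H2| <= w * (gamma * N) by apply: ler_wpM2l.
    have e3 : 0 <= (w - Dmin) * ((1 - gamma) * N) by apply: mulr_ge0; [lra|apply: mulr_ge0; lra].
    lra.
  + set N := supnorm Q1.
    have N0 : 0 <= N by exact: supnorm_ge0.
    apply: supnorm_le; first lra.
    move=> s a.
    rewrite (Fbar_eq p r gamma Q1 s a (mubar_sum hpi hmu)).
    set w := mubar mu pi s a.
    have w0 : 0 <= w := mubar_ge0 hpi hmu s a.
    have w1 : w <= 1 := mubar_le1 hpi hmu s a.
    have hd : `|Q1 s a| <= N := supnorm_ge Q1 s a.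
    have hH := bellman_bound hp hr hg0 Q1 s a; rewrite -/N in hH.
    set H1 := bellman p r gamma Q1 s a in hH *.
    clearbody w.
    have -> : Q1 s a + w * (H1 - Q1 s a) = (1 - w) * Q1 s a + w * H1 by ring.
    apply: le_trans (ler_normD _ _) _.
    rewrite !normrM (ger0_norm w0) ger0_norm; last lra.
    have e1 : (1 - w) * `|Q1 s a| <= (1 - w) * N by apply: ler_wpM2l; lra.
    have e2 : w * `|H1| <= w * (1 + gamma * N) by apply: ler_wpM2l.
    have e3 : 0 <= w * ((1 - gamma) * N) by apply: mulr_ge0; [lra|apply: mulr_ge0; lra].
    lra.
- move=> Qs hQs pi mu hPi hmu Q.
  have hpi := hPi.1.
  split; last first.
    move=> ->; apply: functional_extensionality_dep => s; apply: functional_extensionality_dep => a.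
    by rewrite (Fbar_eq p r gamma Qs s a (mubar_sum hpi hmu)) hQs subrr mulr0 addr0.
  move=> hF.
  have hB : forall s a, bellman p r gamma Q s a = Q s a.
    move=> s a; have := f_equal (fun f => f s a) hF => /=.
    rewrite (Fbar_eq p r gamma Q s a (mubar_sum hpi hmu)).
    have := mubar_pos pi mu hPi hmu s a.
    set w := mubar mu pi s a => wpos h.
    have : w * (bellman p r gamma Q s a - Q s a) = 0.
      by apply: (addrI (Q s a)); rewrite addr0.
    move/eqP; rewrite mulf_eq0 (gt_eqF wpos) /= subr_eq0 => /eqP //.
  set N := supnorm (fun s a => Q s a - Qs s a).
  have N0 : 0 <= N by exact: supnorm_ge0.
  have hN : N <= gamma * N.
    apply: supnorm_le; first by apply: mulr_ge0; lra.
    move=> s a; have := bellman_lip r hp hg0 Q Qs s a.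
    by rewrite hB hQs.
  have N00 : N <= 0.
    have : (1 - gamma) * N <= 0 by lra.
    rewrite pmulr_rle0 //; lra.
  apply: functional_extensionality_dep => s; apply: functional_extensionality_dep => a.
  apply/eqP; rewrite -subr_eq0 -normr_le0.
  exact: le_trans (supnorm_ge (fun s a => Q s a - Qs s a) s a) N00.
- move=> Q1 Q2 pi1 pi2 mu1 mu2 hQ1 hQ2 hPi1 hmu1 hPi2 hmu2.
  have hpi1 := hPi1.1; have hpi2 := hPi2.1.
  set N := supnorm (fun s a => Q1 s a - Q2 s a).
  set W := supnorm (fun s a => mubar mu1 pi1 s a - mubar mu2 pi2 s a).
  have N0 : 0 <= N by exact: supnorm_ge0.
  have W0 : 0 <= W by exact: supnorm_ge0.
  have g1 : 0 < 1 - gamma by lra.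
  set K := 2 / (1 - gamma).
  have K0 : 0 <= K by apply: divr_ge0; lra.
  apply: supnorm_le; first by apply: addr_ge0; [lra|exact: mulr_ge0].
  move=> s a.
  rewrite (Fbar_eq p r gamma Q1 s a (mubar_sum hpi1 hmu1)).
  rewrite (Fbar_eq p r gamma Q2 s a (mubar_sum hpi2 hmu2)).
  set w1 := mubar mu1 pi1 s a; set w2 := mubar mu2 pi2 s a.
  have w10 : 0 <= w1 := mubar_ge0 hpi1 hmu1 s a.
  have w11 : w1 <= 1 := mubar_le1 hpi1 hmu1 s a.
  have hd : `|Q1 s a - Q2 s a| <= N := supnorm_ge (fun s a => Q1 s a - Q2 s a) s a.
  have hw : `|w1 - w2| <= W := supnorm_ge (fun s a => mubar mu1 pi1 s a - mubar mu2 pi2 s a) s a.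
  have hH := bellman_lip r hp hg0 Q1 Q2 s a; rewrite -/N in hH.
  have hH2 := bellman_bound hp hr hg0 Q2 s a.
  have hq2 : `|Q2 s a| <= supnorm Q2 := supnorm_ge Q2 s a.
  set H1 := bellman p r gamma Q1 s a in hH *; set H2 := bellman p r gamma Q2 s a in hH hH2 *.
  have hK : `|H2 - Q2 s a| <= K.
    apply: le_trans (ler_normB _ _) _.
    have : (1 + gamma) * supnorm Q2 <= (1 + gamma) * (1 / (1 - gamma)).
      by apply: ler_wpM2l => //; lra.
    have -> : K = 1 + (1 + gamma) * (1 / (1 - gamma)).
      rewrite /K; field; lra.
    lra.
  clearbody w1 w2.
  have -> : Q1 s a + w1 * (H1 - Q1 s a) - (Q2 s a + w2 * (H2 - Q2 s a)) =
     (Q1 s a - Q2 s a) + w1 * ((H1 - H2) - (Q1 s a - Q2 s a)) + (w1 - w2) * (H2 - Q2 s a)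
     by ring.
  apply: le_trans (ler_normD _ _) _.
  apply: le_trans (lerD (ler_normD _ _) (lexx _)) _.
  rewrite !normrM (ger0_norm w10).
  have e0 : `|H1 - H2 - (Q1 s a - Q2 s a)| <= gamma * N + N.
    by apply: le_trans (ler_normB _ _) _; lra.
  have e1 : w1 * `|H1 - H2 - (Q1 s a - Q2 s a)| <= w1 * (gamma * N + N) by apply: ler_wpM2l.
  have e2 : `|w1 - w2| * `|H2 - Q2 s a| <= W * K by apply: ler_pM.
  have e3 : 0 <= (1 - w1) * ((1 + gamma) * N) by apply: mulr_ge0; [lra|apply: mulr_ge0; lra].
  have e4 : W * K = K * W by ring.
  have e5 : 0 <= (1 - gamma) * N by apply: mulr_ge0; lra.
  lra.
Qed.
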